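(* Let $\mathcal{U}$ be a strict Fraïssé class, let $\mathbf{T}\in\overline{\mathcal{U}}$, and let $\mathcal{C}\subseteq\mathcal{U}$ be a Fraïssé class that is free in $\mathcal{U}$. Then there exists a universal homogeneous homomorphism $u:\mathbf{U}\to\mathbf{T}$ within $\overline{\mathcal{C}}$. Moreover, if $\hat u:\hat{\mathbf{U}}\to\mathbf{T}$ is another universal homogeneous homomorphism to $\mathbf{T}$ within $\overline{\mathcal{C}}$, then there is an isomorphism $h:\hat{\mathbf{U}}\to\mathbf{U}$ with $\hat u=u\circ h$.
   Context: Structures are first-order structures over a signature with arbitrarily many relation symbols and countably many function and constant symbols; an embedding is an injective homomorphism that also reflects all relations. An age is a class of finitely generated structures of one signature with countably many isomorphism types, closed under (isomorphic copies of) finitely generated substructures, and with the joint embedding property (any two members embed into a common member). For an age $\mathcal{C}$, $\overline{\mathcal{C}}$ is the class of all countable structures all of whose finitely generated substructures are isomorphic to members of $\mathcal{C}$. A Fraïssé class is an age with the amalgamation property (for embeddings $f_i:\mathbf{A}\hookrightarrow\mathbf{B}_i$ in $\mathcal{C}$ there are $\mathbf{C}\in\mathcal{C}$ and embeddings $g_i:\mathbf{B}_i\hookrightarrow\mathbf{C}$ with $g_1f_1=g_2f_2$). A Fraïssé class $\mathcal{U}$ is strict if for all $\mathbf{A},\mathbf{B}_1,\mathbf{B}_2\in\mathcal{U}$ and embeddings $f_i:\mathbf{A}\hookrightarrow\mathbf{B}_i$ there are $\mathbf{C}\in\mathcal{U}$ and homomorphisms $g_i:\mathbf{B}_i\to\mathbf{C}$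 such that $(\mathbf{C},(g_1,g_2))$ is a pushout of $f_1,f_2$ in the category of structures in $\overline{\mathcal{U}}$ with all homomorphisms (such a pushout is called the canonical amalgam). A Fraïssé class $\mathcal{C}\subseteq\mathcal{U}$ is free in $\mathcal{U}$ if it is closed under these canonical amalgams in $\mathcal{U}$. For $\mathbf{U}\in\overline{\mathcal{C}}$ and a countable structure $\mathbf{T}$, a homomorphism $u:\mathbf{U}\to\mathbf{T}$ is universal within $\overline{\mathcal{C}}$ if for every $\mathbf{A}\in\overline{\mathcal{C}}$ and homomorphism $h:\mathbf{A}\to\mathbf{T}$ there is an embedding $\iota:\mathbf{A}\hookrightarrow\mathbf{U}$ with $h=u\circ\iota$; it is homogeneous if for every finitely generated substructure $\mathbf{A}\le\mathbf{U}$ and every embedding $\iota:\mathbf{A}\hookrightarrow\mathbf{U}$ with $u\circ\iota=u\restriction_A$ there is an automorphism $\alpha$ of $\mathbf{U}$ with $u\circ\alpha=u$ and $\alpha\restriction_A=\iota$. *)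

(* Defs.v *)
From mathcomp Require Import ssreflect ssrfun ssrbool eqtype ssrnat fintype.
Set Implicit Arguments. Unset Strict Implicit. Unset Printing Implicit Defensive.

(* A first-order signature: arbitrarily many relation symbols, countably many
   function symbols (constants = 0-ary function symbols). *)
Record Signature := {
  RelSym : Type;
  FunSym : Type;
  rel_ar : RelSym -> nat;
  fun_ar : FunSym -> nat;
  funsym_countable : exists c : FunSym -> nat, injective c }.

Record Structure (L : Signature) := {
  carrier :> Type;
  srel : forall r : RelSym L, ('I_(rel_ar r) -> carrier) -> Prop;
  sfun : forall f : FunSym L, ('I_(fun_ar f) -> carrier) -> carrier }.

Arguments srel {L} s r _.
Arguments sfun {L} s f _.

Section FO.
Context {L : Signature}.

Definition is_hom (A B : Structure L) (h : A -> B) : Prop :=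
  (forall f xs, h (sfun A f xs) = sfun B f (fun i => h (xs i))) /\
  (forall r xs, srel A r xs -> srel B r (fun i => h (xs i))).

Definition is_emb (A B : Structure L) (h : A -> B) : Prop :=
  is_hom h /\ injective h /\
  (forall r xs, srel B r (fun i => h (xs i)) -> srel A r xs).

Definition is_iso (A B : Structure L) (h : A -> B) : Prop :=
  is_emb h /\ (forall y, exists x, h x = y).

Definition isomorphic (A B : Structure L) : Prop := exists h : A -> B, is_iso h.

Definition countable (A : Structure L) : Prop := exists c : A -> nat, injective c.

Definition closed (A : Structure L) (P : A -> Prop) : Prop :=
  forall f (xs : 'I_(fun_ar f) -> A), (forall i, P (xs i)) -> P (sfun A f xs).

Definition sub_struct (A : Structure L) (P : A -> Prop) (HP : closed P)
  : Structure L :=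
  {| carrier := {x : A | P x};
     srel := fun r xs => srel A r (fun i => proj1_sig (xs i));
     sfun := fun f xs => exist P (sfun A f (fun i => proj1_sig (xs i)))
                              (HP f _ (fun i => proj2_sig (xs i))) |}.

Definition gen (A : Structure L) (n : nat) (g : 'I_n -> A) (x : A) : Prop :=
  forall P : A -> Prop, closed P -> (forall i, P (g i)) -> P x.

Lemma gen_closed (A : Structure L) (n : nat) (g : 'I_n -> A) : closed (gen g).
Proof.
  intros f xs H P HP Hg. apply HP. intros i. exact (H i P HP Hg).
Qed.

Definition fg_sub (A : Structure L) (n : nat) (g : 'I_n -> A) : Structure L :=
  @sub_struct A (gen g) (@gen_closed A n g).

Definition fingen (A : Structure L) : Prop :=
  exists n (g : 'I_n -> A), forall x, gen g x.

Definition Class := Structure L -> Prop.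

Definition age (K : Class) : Prop :=
  (exists A, K A) /\
  (forall A, K A -> fingen A) /\
  (exists S : nat -> Structure L, forall A, K A -> exists n, isomorphic A (S n)) /\
  (forall A B, K A -> fingen B -> (exists e : B -> A, is_emb e) -> K B) /\
  (forall A B, K A -> K B ->
     exists D, K D /\ (exists e : A -> D, is_emb e) /\ (exists e : B -> D, is_emb e)).

Definition amalgamation (K : Class) : Prop :=
  forall (A B1 B2 : Structure L) (f1 : A -> B1) (f2 : A -> B2),
    K A -> K B1 -> K B2 -> is_emb f1 -> is_emb f2 ->
    exists (D : Structure L) (g1 : B1 -> D) (g2 : B2 -> D),
      K D /\ is_emb g1 /\ is_emb g2 /\ (forall a, g1 (f1 a) = g2 (f2 a)).

Definition fraisse (K : Class) : Prop := age K /\ amalgamation K.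

Definition Kbar (K : Class) : Class := fun A =>
  countable A /\
  forall n (g : 'I_n -> A), exists B, K B /\ isomorphic (fg_sub g) B.

Definition is_pushout (K : Class) (A B1 B2 C : Structure L)
    (f1 : A -> B1) (f2 : A -> B2) (g1 : B1 -> C) (g2 : B2 -> C) : Prop :=
  Kbar K A /\ Kbar K B1 /\ Kbar K B2 /\ Kbar K C /\
  is_hom f1 /\ is_hom f2 /\ is_hom g1 /\ is_hom g2 /\
  (forall a, g1 (f1 a) = g2 (f2 a)) /\
  (forall (D : Structure L) (k1 : B1 -> D) (k2 : B2 -> D),
     Kbar K D -> is_hom k1 -> is_hom k2 -> (forall a, k1 (f1 a) = k2 (f2 a)) ->
     exists m : C -> D, is_hom m /\ (forall b, m (g1 b) = k1 b) /\
       (forall b, m (g2 b) = k2 b) /\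
       (forall m' : C -> D, is_hom m' -> (forall b, m' (g1 b) = k1 b) ->
          (forall b, m' (g2 b) = k2 b) -> forall c, m' c = m c)).

Definition strict (U : Class) : Prop :=
  fraisse U /\
  forall (A B1 B2 : Structure L) (f1 : A -> B1) (f2 : A -> B2),
    U A -> U B1 -> U B2 -> is_emb f1 -> is_emb f2 ->
    exists (C : Structure L) (g1 : B1 -> C) (g2 : B2 -> C),
      U C /\ is_pushout U f1 f2 g1 g2.

Definition free_in (C U : Class) : Prop :=
  forall (A B1 B2 D : Structure L) (f1 : A -> B1) (f2 : A -> B2)
         (g1 : B1 -> D) (g2 : B2 -> D),
    C A -> C B1 -> C B2 -> is_emb f1 -> is_emb f2 ->
    U D -> is_pushout U f1 f2 g1 g2 -> C D.

Definition universal_within (K : Class) (U T : Structure L) (u : U -> T) : Prop :=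
  forall (A : Structure L) (h : A -> T), Kbar K A -> is_hom h ->
    exists i : A -> U, is_emb i /\ (forall a, h a = u (i a)).

Definition homogeneous_hom (U T : Structure L) (u : U -> T) : Prop :=
  forall n (g : 'I_n -> U) (i : fg_sub g -> U),
    is_emb i -> (forall a, u (i a) = u (proj1_sig a)) ->
    exists alpha : U -> U, is_iso alpha /\ (forall x, u (alpha x) = u x) /\
      (forall a, alpha (proj1_sig a) = i a).

End FO.

(* Main.v *)
Require Import Defs.
From mathcomp Require Import ssreflect ssrfun ssrbool eqtype ssrnat seq choice fintype bigop.
From Stdlib Require Import Cantor Lia.
From Stdlib Require Import Classical IndefiniteDescription FunctionalExtensionality PropExtensionality ProofIrrelevance.
Set Implicit Arguments. Unset Strict Implicit. Unset Printing Implicit Defensive.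

Definition cid := constructive_indefinite_description.

Definition emi (P : Prop) : {P} + {~ P}.
Proof.
  have H : exists b : bool, if b then P else ~ P.
    by case: (classic P) => H; [exists true | exists false].
  case: (cid H) => [[] Hb]; [left|right]; exact Hb.
Defined.

Lemma fchoice (X Y : Type) (R : X -> Y -> Prop) :
  (forall x, exists y, R x y) -> exists f : X -> Y, forall x, R x (f x).
Proof. move=> H. exists (fun x => proj1_sig (cid (H x))) => x. exact: proj2_sig (cid (H x)). Qed.

Lemma max_ord (n : nat) (P : nat -> 'I_n -> Prop) :
  (forall k k' i, k <= k' -> P k i -> P k' i) ->
  (forall i, exists k, P k i) -> forall m, exists k, m <= k /\ forall i, P k i.
Proof.
  move=> Hm H m. case: (fchoice H) => kf Hk.
  exists (maxn m (\max_(i < n) kf i)); split; first exact: leq_maxl.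
  move=> i. apply: Hm (Hk i). apply: leq_trans (leq_maxr _ _).
  exact: (@leq_bigmax _ (fun i => kf i)).
Qed.

Lemma sig_eq (A : Type) (P : A -> Prop) (x y : {a | P a}) : proj1_sig x = proj1_sig y -> x = y.
Proof. case: x => a Ha; case: y => b Hb /= E. subst b. by rewrite (proof_irrelevance _ Ha Hb). Qed.

Section Basics.
Context {L : Signature}.
Implicit Types A B C D : Structure L.

Lemma hom_id A : is_hom (fun x : A => x).
Proof. by split. Qed.
Lemma emb_id A : is_emb (fun x : A => x).
Proof. by split; [apply: hom_id| split]. Qed.
Lemma iso_id A : is_iso (fun x : A => x).
Proof. split; [exact: emb_id| by move=> y; exists y]. Qed.

Lemma hom_comp A B C (f : A -> B) (g : B -> C) : is_hom f -> is_hom g -> is_hom (fun x => g (f x)).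
Proof.
  move=> [Hf1 Hf2] [Hg1 Hg2]; split.
  - move=> fs xs. by rewrite Hf1 Hg1.
  - move=> r xs H. exact: Hg2 (Hf2 _ _ H).
Qed.

Lemma emb_comp A B C (f : A -> B) (g : B -> C) : is_emb f -> is_emb g -> is_emb (fun x => g (f x)).
Proof.
  move=> [Hf [If Rf]] [Hg [Ig Rg]]; split; first exact: hom_comp.
  split; first by move=> x y /Ig /If.
  move=> r xs H. apply: Rf. exact: Rg H.
Qed.

Lemma iso_comp A B C (f : A -> B) (g : B -> C) : is_iso f -> is_iso g -> is_iso (fun x => g (f x)).
Proof.
  move=> [Ef Sf] [Eg Sg]; split; first exact: emb_comp.
  move=> z. case: (Sg z) => y <-. case: (Sf y) => x <-. by exists x.
Qed.

Lemma iso_emb A B (f : A -> B) : is_iso f -> is_emb f.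
Proof. by case. Qed.

Lemma iso_inv A B (f : A -> B) : is_iso f ->
  exists g : B -> A, is_iso g /\ (forall x, g (f x) = x) /\ (forall y, f (g y) = y).
Proof.
  move=> [[[Hf1 Hf2] [If Rf]] Sf]. case: (fchoice Sf) => g Hg.
  have gf : forall x, g (f x) = x by move=> x; apply: If; rewrite Hg.
  exists g; split; last by split.
  split; last by move=> x; exists (f x).
  split; [split|split].
  - move=> fs ys. apply: If. rewrite Hg Hf1. congr (sfun _ _ _). apply: functional_extensionality => i. by rewrite Hg.
  - move=> r ys H. apply: Rf. have -> : (fun i => f (g (ys i))) = ys by apply: functional_extensionality => i; rewrite Hg.
    exact H.
  - by move=> x y E; rewrite -(Hg x) -(Hg y) E.
  - move=> r ys H. have := Hf2 _ _ H. have -> : (fun i => f (g (ys i))) = ys by apply: functional_extensionality => i; rewrite Hg.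
    done.
Qed.

Lemma emb_of_comp A B C (m : A -> B) (e : B -> C) (e' : A -> C) :
  is_hom m -> is_emb e -> is_emb e' -> (forall x, e (m x) = e' x) -> is_emb m.
Proof.
  move=> Hm [He [Ie Re]] [He' [Ie' Re']] E; split; first done. split.
  - move=> x y Hxy. apply: Ie'. by rewrite -!E Hxy.
  - move=> r xs H. apply: Re'. have := (proj2 He) _ _ H.
    have -> : (fun i => e (m (xs i))) = (fun i => e' (xs i)) by apply: functional_extensionality => i; rewrite E.
    done.
Qed.

Lemma factor A B D (psi : B -> D) (e : A -> D) :
  is_emb psi -> is_hom e -> (forall x, exists y, psi y = e x) ->
  exists m : A -> B, is_hom m /\ (forall x, psi (m x) = e x).
Proof.
  move=> [[Hp1 Hp2] [Ip Rp]] [He1 He2] H. case: (fchoice H) => m Hm.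
  exists m; split; last done. split.
  - move=> fs xs. apply: Ip. rewrite Hm He1 Hp1. congr (sfun _ _ _). apply: functional_extensionality => i. by rewrite Hm.
  - move=> r xs Hr. apply: Rp. have := He2 _ _ Hr.
    have -> : (fun i => psi (m (xs i))) = (fun i => e (xs i)) by apply: functional_extensionality => i; rewrite Hm.
    done.
Qed.

Lemma gen_base A n (g : 'I_n -> A) i : gen g (g i).
Proof. by move=> P _ H. Qed.
Arguments gen_base {A n} g i.

Lemma hom_gen A B (h : A -> B) n (g : 'I_n -> A) x : is_hom h -> gen g x -> gen (fun i => h (g i)) (h x).
Proof.
  move=> [H1 _] Hx. apply: (Hx (fun x => gen (fun i => h (g i)) (h x))).
  - move=> fs xs Hxs. rewrite H1. exact: gen_closed.
  - move=> i /=. move=> P _ HP. exact: (HP i).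
Qed.

Lemma gen_surj A B (h : A -> B) n (g : 'I_n -> A) y : is_hom h -> gen (fun i => h (g i)) y ->
  exists x, gen g x /\ h x = y.
Proof.
  move=> [H1 _] Hy. apply: (Hy (fun y => exists x, gen g x /\ h x = y)).
  - move=> fs ys Hys. case: (fchoice Hys) => xs Hxs.
    exists (sfun A fs xs); split.
    + apply: gen_closed => i. by case: (Hxs i).
    + rewrite H1. congr (sfun _ _ _). apply: functional_extensionality => i. by case: (Hxs i).
  - move=> i. exists (g i); split; [exact: gen_base| done].
Qed.

Lemma hom_eq_gen A B (h1 h2 : A -> B) n (g : 'I_n -> A) :
  is_hom h1 -> is_hom h2 -> (forall i, h1 (g i) = h2 (g i)) -> forall x, gen g x -> h1 x = h2 x.
Proof.
  move=> [H1 _] [H2 _] Hg x Hx. apply: (Hx (fun x => h1 x = h2 x)); last done.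
  move=> fs xs Hxs. rewrite H1 H2. congr (sfun _ _ _). by apply: functional_extensionality.
Qed.

Lemma gen_mono A n m (g : 'I_n -> A) (g' : 'I_m -> A) :
  (forall i, gen g' (g i)) -> forall x, gen g x -> gen g' x.
Proof. move=> H x Hx. apply: Hx; [exact: gen_closed| done]. Qed.

Lemma gen_0 A (g g' : 'I_0 -> A) x : gen g x -> gen g' x.
Proof. apply: gen_mono => i. by case: i. Qed.

Definition elt A n (g : 'I_n -> A) (i : 'I_n) : fg_sub g := exist _ (g i) (gen_base g i).

Lemma val_hom A (P : A -> Prop) (HP : closed P) : is_emb (fun x : sub_struct HP => proj1_sig x).
Proof. split; [split|split] => //. move=> x y. exact: sig_eq. Qed.

Lemma fg_sub_gen A n (g : 'I_n -> A) (y : fg_sub g) : gen (elt g) y.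
Proof.
  have Hv := val_hom (gen_closed (g:=g)).
  have Hy : gen (fun i => proj1_sig (elt g i)) (proj1_sig y) by exact: proj2_sig y.
  case: (gen_surj (proj1 Hv) Hy) => x [Hx E].
  by rewrite -(sig_eq E).
Qed.

Lemma fingen_fg A n (g : 'I_n -> A) : fingen (fg_sub g).
Proof. exists n, (elt g). exact: fg_sub_gen. Qed.

Lemma hom_eq_fg A B n (g : 'I_n -> A) (h1 h2 : fg_sub g -> B) :
  is_hom h1 -> is_hom h2 -> (forall i, h1 (elt g i) = h2 (elt g i)) -> forall x, h1 x = h2 x.
Proof. move=> H1 H2 E x. apply: (hom_eq_gen H1 H2 E). exact: fg_sub_gen. Qed.

Lemma hom_eq_fingen A B (h1 h2 : A -> B) n (g : 'I_n -> A) :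
  (forall x, gen g x) -> is_hom h1 -> is_hom h2 -> (forall i, h1 (g i) = h2 (g i)) -> forall x, h1 x = h2 x.
Proof. move=> Hg H1 H2 E x. exact: (hom_eq_gen H1 H2 E). Qed.

End Basics.

Section Terms.
Context {L : Signature}.
Implicit Types A B C D : Structure L.

Inductive term (n : nat) : Type :=
| tvar : 'I_n -> term n
| tapp : forall f : FunSym L, ('I_(fun_ar f) -> term n) -> term n.

Fixpoint eval (A : Structure L) n (g : 'I_n -> A) (t : term n) : A :=
  match t with
  | tvar i => g i
  | tapp f args => sfun A f (fun j => eval g (args j))
  end.

Definition cF : FunSym L -> nat := proj1_sig (cid (funsym_countable L)).
Lemma cF_inj : injective cF.
Proof. exact: proj2_sig (cid (funsym_countable L)). Qed.

Fixpoint enc n (t : term n) : GenTree.tree nat :=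
  match t with
  | tvar i => GenTree.Leaf (nat_of_ord i)
  | tapp f args => GenTree.Node (cF f) [seq enc (args j) | j <- enum 'I_(fun_ar f)]
  end.

Lemma enc_inj n : injective (@enc n).
Proof.
  elim=> [i|f args IH] [i'|f' args'] //=.
  - by move=> [] /val_inj ->.
  - move=> [] /cF_inj E. subst f'. move/eq_in_map => H.
    have -> : args = args'; last done.
    apply: functional_extensionality => j. apply: IH. apply: H. by rewrite mem_enum.
Qed.

Lemma gen_term (A : Structure L) n (g : 'I_n -> A) x : gen g x -> exists t, eval g t = x.
Proof.
  move=> Hx. apply: (Hx (fun x => exists t, eval g t = x)).
  - move=> f xs H. case: (fchoice H) => ts Hts. exists (tapp ts) => /=.
    congr (sfun _ _ _). by apply: functional_extensionality.
  - move=> i. by exists (tvar i).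
Qed.

Lemma fingen_countable (A : Structure L) : fingen A -> countable A.
Proof.
  move=> [n [g Hg]].
  have H : forall x : A, exists t, eval g t = x by move=> x; apply: gen_term.
  case: (fchoice H) => tf Htf.
  exists (fun x => pickle (enc (tf x))) => x y /(pcan_inj pickleK) /enc_inj E.
  by rewrite -(Htf x) -(Htf y) E.
Qed.

Lemma age_fingen (K : @Class L) A : age K -> K A -> fingen A.
Proof. by case=> _ [H _]; apply: H. Qed.

Lemma age_emb (K : @Class L) A B (e : B -> A) : age K -> K A -> fingen B -> is_emb e -> K B.
Proof. case=> _ [_ [_ [H _]]] HA HB He. apply: H HA HB _. by exists e. Qed.

Lemma age_fg_sub (K : @Class L) A n (g : 'I_n -> A) : age K -> K A -> K (fg_sub g).
Proof.
  move=> HK HA. apply: (age_emb (e := fun x : fg_sub g => proj1_sig x)) HK HA _ _.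
  - exact: fingen_fg.
  - exact: val_hom.
Qed.

Lemma age_Kbar (K : @Class L) A : age K -> K A -> Kbar K A.
Proof.
  move=> HK HA; split; first by apply: fingen_countable; apply: age_fingen HA.
  move=> n g. exists (fg_sub g); split; first exact: age_fg_sub.
  exists id. exact: iso_id.
Qed.

Lemma Kbar_fg (K : @Class L) A n (g : 'I_n -> A) : age K -> Kbar K A -> K (fg_sub g).
Proof.
  move=> HK [_ H]. case: (H n g) => B [HB [phi Hphi]].
  apply: (age_emb (e := phi)) HK HB _ (iso_emb Hphi). exact: fingen_fg.
Qed.

Lemma age_iso (K : @Class L) A B (phi : A -> B) : age K -> K A -> is_iso phi -> K B.
Proof.
  move=> HK HA Hphi. case: (iso_inv Hphi) => psi [Hpsi _].
  refine (age_emb (e := psi) HK HA _ (iso_emb Hpsi)).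
  case: (age_fingen HK HA) => n [g Hg]. exists n, (fun i => phi (g i)) => y.
  have Hh := proj1 (iso_emb Hphi). case: Hphi => _ Sphi. case: (Sphi y) => x <-. apply: hom_gen; last exact: Hg.
  exact: Hh.
Qed.

End Terms.

Lemma emb_of_comp2 {L : Signature} (A B D : Structure L) (g : A -> B) (m : B -> D) (k : A -> D) :
  is_hom g -> is_hom m -> is_emb k -> (forall x, m (g x) = k x) -> is_emb g.
Proof.
  move=> Hg [_ Hm] [_ [Ik Rk]] E; split; first done. split.
  - move=> x y Hxy. apply: Ik. by rewrite -!E Hxy.
  - move=> r xs H. apply: Rk. have := Hm _ _ H.
    have -> : (fun i => m (g (xs i))) = (fun i => k (xs i)) by apply: functional_extensionality => i; rewrite E.
    done.
Qed.

Section Main.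
Context {L : Signature} (Ucl Ccl : @Class L) (T : Structure L).
Hypotheses (HU : strict Ucl) (HT : Kbar Ucl T) (HC : fraisse Ccl)
  (HCU : forall A, Ccl A -> Ucl A) (Hfree : free_in Ccl Ucl).
Implicit Types A B C D : Structure L.

Lemma ageU : age Ucl. Proof. by case: HU => [[]]. Qed.
Lemma ageC : age Ccl. Proof. by case: HC. Qed.

Lemma amalg_T A B1 B2 (f1 : A -> B1) (f2 : A -> B2) (h1 : B1 -> T) (h2 : B2 -> T) :
  Ccl A -> Ccl B1 -> Ccl B2 -> is_emb f1 -> is_emb f2 -> is_hom h1 -> is_hom h2 ->
  (forall a, h1 (f1 a) = h2 (f2 a)) ->
  exists (E : Structure L) (g1 : B1 -> E) (g2 : B2 -> E) (hE : E -> T),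
    Ccl E /\ is_emb g1 /\ is_emb g2 /\ (forall a, g1 (f1 a) = g2 (f2 a)) /\ is_hom hE /\
    (forall b, hE (g1 b) = h1 b) /\ (forall b, hE (g2 b) = h2 b).
Proof.
  move=> HA HB1 HB2 Hf1 Hf2 Hh1 Hh2 Hcomm.
  case: HU => _ Hstr.
  case: (Hstr A B1 B2 f1 f2 (HCU HA) (HCU HB1) (HCU HB2) Hf1 Hf2) => E [g1 [g2 [HE PO]]].
  have HEC : Ccl E := Hfree HA HB1 HB2 Hf1 Hf2 HE PO.
  case: PO => _ [_ [_ [_ [_ [_ [Hg1 [Hg2 [Hgc Huniv]]]]]]]].
  case: (Huniv T h1 h2 HT Hh1 Hh2 Hcomm) => m [Hm [Hm1 [Hm2 _]]].
  case: HC => _ APC.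
  case: (APC A B1 B2 f1 f2 HA HB1 HB2 Hf1 Hf2) => D [k1 [k2 [HD [Hk1 [Hk2 Hkc]]]]].
  have HDK : Kbar Ucl D := age_Kbar ageU (HCU HD).
  case: (Huniv D k1 k2 HDK (proj1 Hk1) (proj1 Hk2) Hkc) => m' [Hm' [Hm'1 [Hm'2 _]]].
  exists E, g1, g2, m.
  refine (conj HEC (conj (emb_of_comp2 Hg1 Hm' Hk1 Hm'1) (conj (emb_of_comp2 Hg2 Hm' Hk2 Hm'2) _))).
  exact (conj Hgc (conj Hm (conj Hm1 Hm2))).
Qed.

Definition EP (V : Structure L) (v : V -> T) :=
  forall A B (f : A -> B) (hB : B -> T) (e : A -> V),
    Ccl A -> Ccl B -> is_emb f -> is_hom hB -> is_emb e -> (forall a, v (e a) = hB (f a)) ->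
    exists e' : B -> V, is_emb e' /\ (forall a, e' (f a) = e a) /\ (forall b, v (e' b) = hB b).

Definition g0 (A : Type) : 'I_0 -> A := fun i => False_rect _ (Bool.diff_false_true (ltn_ord i)).


Lemma closed_factor A B D (e1 : fg_sub (g0 A) -> D) (e2 : fg_sub (g0 B) -> D) :
  is_emb e1 -> is_emb e2 ->
  exists m : fg_sub (g0 A) -> fg_sub (g0 B), is_emb m /\ forall x, e2 (m x) = e1 x.
Proof.
  move=> He1 He2.
  have H : forall x, exists y, e2 y = e1 x.
    move=> x. have Hx := fg_sub_gen x.
    have H1 := hom_gen (proj1 He1) Hx.
    have H2 : gen (fun i => e2 (elt (g0 B) i)) (e1 x) by apply: gen_0 H1.
    case: (gen_surj (proj1 He2) H2) => y [_ <-]. by exists y.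
  case: (factor He2 (proj1 He1) H) => m [Hm E].
  exists m; split; last done. exact: (emb_of_comp Hm He2 He1 E).
Qed.

Lemma exists_C_to_T : exists A (h : A -> T), Ccl A /\ is_hom h.
Proof.
  case: ageC => [[A0 HA0] _].
  have HP : Ccl (fg_sub (g0 A0)) := age_fg_sub _ ageC HA0.
  case: HT => _ HTf. case: (HTf 0 (g0 T)) => BT [HBT [phi Hphi]].
  case: ageU => _ [_ [_ [_ JEP]]].
  case: (JEP _ _ (HCU HP) HBT) => D [_ [[e1 He1] [e2 He2]]].
  case: (iso_inv Hphi) => psi [Hpsi [Hpsi1 Hpsi2]].
  have He2' : is_emb (fun x => e2 (phi x)) := emb_comp (iso_emb Hphi) He2.
  case: (closed_factor He1 He2') => m [Hm _].
  exists (fg_sub (g0 A0)), (fun x => proj1_sig (m x)); split; first done.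
  apply: hom_comp (proj1 Hm) _. exact: (proj1 (val_hom _)).
Qed.

Lemma init_emb (V : Structure L) (v : V -> T) A (h : A -> T) :
  EP v -> Kbar Ccl V -> Kbar Ccl A -> is_hom v -> is_hom h ->
  exists phi : fg_sub (g0 A) -> V, is_emb phi /\ forall a, v (phi a) = h (proj1_sig a).
Proof.
  move=> HEP HV HA Hv Hh.
  have HV0 : Ccl (fg_sub (g0 V)) := Kbar_fg _ ageC HV.
  have HA0 : Ccl (fg_sub (g0 A)) := Kbar_fg _ ageC HA.
  case: ageC => _ [_ [_ [_ JEP]]].
  case: (JEP _ _ HV0 HA0) => D [_ [[e1 He1] [e2 He2]]].
  case: (closed_factor He1 He2) => m [Hm _].
  case: (HEP _ _ m (fun b => h (proj1_sig b)) (fun a => proj1_sig a) HV0 HA0 Hm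
           (hom_comp (proj1 (val_hom _)) Hh) (val_hom _)).
  - apply: hom_eq_fg; [exact: hom_comp (proj1 (val_hom _)) Hv
                      | exact: hom_comp (proj1 Hm) (hom_comp (proj1 (val_hom _)) Hh)
                      | by case].
  - move=> e' [He' [_ Hv']]. by exists e'.
Qed.

End Main.

Lemma build_seq (X : Type) (R : nat -> X -> X -> Prop) (x0 : X) :
  (forall k x, exists y, R k x y) -> exists s : nat -> X, s 0 = x0 /\ forall k, R k (s k) (s k.+1).
Proof.
  move=> H. have H' : forall p : nat * X, exists y, R p.1 p.2 y by move=> [k x]; exact: H.
  case: (fchoice H') => F HF.
  exists (fix s k := match k with 0 => x0 | k'.+1 => F (k', s k') end); split => // k.
  exact: (HF (k, _)).
Qed.

Section Incl.
Context {L : Signature}.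
Definition incl (A : Structure L) (P Q : A -> Prop) (HP : closed P) (HQ : closed Q)
  (H : forall x, P x -> Q x) : sub_struct HP -> sub_struct HQ :=
  fun a => exist _ (proj1_sig a) (H _ (proj2_sig a)).

Lemma incl_emb (A : Structure L) (P Q : A -> Prop) (HP : closed P) (HQ : closed Q) H :
  is_emb (@incl A P Q HP HQ H).
Proof.
  split; [split|split] => //.
  - move=> f xs. exact: sig_eq.
  - move=> x y E. apply: sig_eq. exact: (f_equal (@proj1_sig _ _) E).
Qed.

Definition ext (A : Type) n (g : 'I_n -> A) (x : A) : 'I_n.+1 -> A :=
  fun i => match unlift ord_max i with Some j => g j | None => x end.

Lemma ext_lift (A : Type) n (g : 'I_n -> A) x j : ext g x (lift ord_max j) = g j.
Proof. by rewrite /ext liftK. Qed.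
Lemma ext_max (A : Type) n (g : 'I_n -> A) x : ext g x ord_max = x.
Proof. by rewrite /ext unlift_none. Qed.

Lemma gen_ext (A : Structure L) n (g : 'I_n -> A) x y : gen g y -> gen (ext g x) y.
Proof. apply: gen_mono => i. rewrite -(ext_lift g x). exact: gen_base. Qed.
End Incl.

Section BF.
Context {L : Signature} (Ccl : @Class L) (T : Structure L).
Hypothesis (HCage : age Ccl).
Implicit Types A B C D : Structure L.

Definition PI (U1 U2 : Structure L) (u1 : U1 -> T) (u2 : U2 -> T) n (g1 : 'I_n -> U1) (g2 : 'I_n -> U2) :=
  exists phi : fg_sub g1 -> U2, is_emb phi /\ (forall a, u2 (phi a) = u1 (proj1_sig a)) /\
    (forall i, phi (elt g1 i) = g2 i).

Lemma PI_sym (U1 U2 : Structure L) (u1 : U1 -> T) (u2 : U2 -> T) n (g1 : 'I_n -> U1) g2 :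
  PI u1 u2 g1 g2 -> PI u2 u1 g2 g1.
Proof.
  move=> [phi [Hphi [Hu Hg]]].
  have H : forall y : fg_sub g2, exists x, phi x = proj1_sig y.
    move=> y. have Hy : gen (fun i => phi (elt g1 i)) (proj1_sig y).
      have -> : (fun i => phi (elt g1 i)) = g2 by apply: functional_extensionality.
      exact: (proj2_sig y).
    case: (gen_surj (proj1 Hphi) Hy) => x [_ E]. by exists x.
  case: (factor Hphi (proj1 (val_hom _)) H) => m [Hm Em].
  have Hme : is_emb m := emb_of_comp Hm Hphi (val_hom _) Em.
  exists (fun y => proj1_sig (m y)); split; first exact: emb_comp Hme (val_hom _).
  split.
  - move=> a. by rewrite -Hu Em.
  - move=> i. have : phi (m (elt g2 i)) = phi (elt g1 i) by rewrite Em Hg.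
    by move/(proj1 (proj2 Hphi)) => ->.
Qed.

Lemma PI_forth (U1 U2 : Structure L) (u1 : U1 -> T) (u2 : U2 -> T) n (g1 : 'I_n -> U1) g2 :
  EP Ccl u2 -> Kbar Ccl U1 -> is_hom u1 -> PI u1 u2 g1 g2 ->
  forall x, exists y, PI u1 u2 (ext g1 x) (ext g2 y).
Proof.
  move=> HEP HU1 Hu1 [phi [Hphi [Hu Hg]]] x.
  pose f := @incl L U1 _ _ (gen_closed (g:=g1)) (gen_closed (g:=ext g1 x)) (gen_ext (g:=g1) (x:=x)).
  have Hf : is_emb f by apply: incl_emb.
  have HA : Ccl (fg_sub g1) := Kbar_fg _ HCage HU1.
  have HB : Ccl (fg_sub (ext g1 x)) := Kbar_fg _ HCage HU1.
  case: (HEP _ _ f (fun b => u1 (proj1_sig b)) phi HA HB Hf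
     (hom_comp (proj1 (val_hom _)) Hu1) Hphi Hu) => e' [He' [Hf' Hu']].
  exists (e' (elt (ext g1 x) ord_max)), e'; split; first done. split; first done.
  move=> i. case: (unliftP ord_max i) => [j ->|->].
  - rewrite ext_lift -Hg -Hf'. congr e'. apply: sig_eq => /=. by rewrite ext_lift.
  - by rewrite ext_max.
Qed.

Record St (U1 U2 : Structure L) := MkSt { sn : nat; s1 : 'I_sn -> U1; s2 : 'I_sn -> U2 }.
Arguments sn {U1 U2} s.
Arguments s1 {U1 U2} s _.
Arguments s2 {U1 U2} s _.
Arguments MkSt {U1 U2 sn} _ _.

Section Chain.
Variables (U1 U2 : Structure L) (u1 : U1 -> T) (u2 : U2 -> T).
Hypotheses (HU1 : Kbar Ccl U1) (HU2 : Kbar Ccl U2) (Hu1 : is_hom u1) (Hu2 : is_hom u2)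
  (HEP2 : EP Ccl u2).
Variable (back : bool).
Hypothesis (HEP1 : back -> EP Ccl u1).

Definition PIs (st : St U1 U2) := PI u1 u2 (s1 st) (s2 st).
Definition Pairs (st : St U1 U2) x y := exists i, s1 st i = x /\ s2 st i = y.
Definition Mono (st st' : St U1 U2) := forall x y, Pairs st x y -> Pairs st' x y.

Lemma Mono_ext st x y : Mono st (MkSt (ext (s1 st) x) (ext (s2 st) y)).
Proof. move=> a b [i [<- <-]]. exists (lift ord_max i) => /=. by rewrite !ext_lift. Qed.

Lemma Pairs_ext st x y : Pairs (MkSt (ext (s1 st) x) (ext (s2 st) y)) x y.
Proof. exists ord_max => /=. by rewrite !ext_max. Qed.

Lemma stepF st : PIs st -> forall x, exists st', PIs st' /\ Mono st st' /\ exists y, Pairs st' x y.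
Proof.
  move=> H x. case: (PI_forth HEP2 HU1 Hu1 H x) => y Hy.
  exists (MkSt (ext (s1 st) x) (ext (s2 st) y)); split; first exact: Hy.
  split; first exact: Mono_ext. exists y. exact: Pairs_ext.
Qed.

Lemma stepB st : back -> PIs st -> forall y, exists st', PIs st' /\ Mono st st' /\ exists x, Pairs st' x y.
Proof.
  move=> Hb H y. case: (PI_forth (HEP1 Hb) HU2 Hu2 (PI_sym H) y) => x Hx.
  exists (MkSt (ext (s1 st) x) (ext (s2 st) y)); split; first exact: (PI_sym Hx).
  split; first exact: Mono_ext. exists x. exact: Pairs_ext.
Qed.

Lemma Pairs_fun st x y y' : PIs st -> Pairs st x y -> Pairs st x y' -> y = y'.
Proof.
  move=> [phi [_ [_ Hg]]] [i [Hi1 Hi2]] [j [Hj1 Hj2]].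
  rewrite -Hi2 -Hj2 -!Hg. congr phi. apply: sig_eq => /=. by rewrite Hi1 Hj1.
Qed.

Lemma Pairs_elt st x y : PIs st -> Pairs st x y ->
  exists phi : fg_sub (s1 st) -> U2, is_emb phi /\ (forall a, u2 (phi a) = u1 (proj1_sig a)) /\
   exists a, proj1_sig a = x /\ phi a = y.
Proof.
  move=> [phi [Hphi [Hu Hg]]] [i [<- <-]]. exists phi; do 2!(split; first done).
  exists (elt (s1 st) i); split => //.
Qed.

End Chain.
End BF.
Arguments sn {L U1 U2} s.
Arguments s1 {L U1 U2} s _.
Arguments s2 {L U1 U2} s _.
Arguments MkSt {L U1 U2 sn} _ _.

Section BF2.
Context {L : Signature} (Ccl : @Class L) (T : Structure L).
Hypothesis (HCage : age Ccl).
Variables (U1 U2 : Structure L) (u1 : U1 -> T) (u2 : U2 -> T).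
Hypotheses (HU1 : Kbar Ccl U1) (HU2 : Kbar Ccl U2) (Hu1 : is_hom u1) (Hu2 : is_hom u2)
  (HEP2 : EP Ccl u2).
Variable (back : bool).
Hypothesis (HEP1 : back -> EP Ccl u1).

Notation PIs := (PIs u1 u2).

Lemma Mono_trans (a b c : St U1 U2) : Mono a b -> Mono b c -> Mono a c.
Proof. move=> H1 H2 x y H. exact: H2 (H1 _ _ H). Qed.

Lemma PI_pair (st : St U1 U2) (phi : fg_sub (s1 st) -> U2) :
  (forall i, phi (elt (s1 st) i) = s2 st i) -> forall x y, Pairs st x y ->
  exists a, proj1_sig a = x /\ phi a = y.
Proof. move=> Hg x y [i [<- <-]]. by exists (elt (s1 st) i). Qed.

Theorem BF_thm n (g1 : 'I_n -> U1) g2 : PI u1 u2 g1 g2 ->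
  exists alpha : U1 -> U2, is_emb alpha /\ (forall x, u2 (alpha x) = u1 x) /\
    (forall i, alpha (g1 i) = g2 i) /\ (back -> forall y, exists x, alpha x = y).
Proof.
  move=> H0.
  case: (HU1) => [[c1 Ic1] _]. case: (HU2) => [[c2 Ic2] _].
  pose R k st st' := PIs st -> PIs st' /\ Mono st st' /\
      (forall x, c1 x = k -> exists y, Pairs st' x y) /\
      (back -> forall y, c2 y = k -> exists x, Pairs st' x y).
  have L1 : forall k st, PIs st -> exists st1, PIs st1 /\ Mono st st1 /\
      forall x, c1 x = k -> exists y, Pairs st1 x y.
    move=> k st Hst. case: (classic (exists x, c1 x = k)) => [[x Hx]|Hn].
    - case: (stepF HCage HU1 Hu1 HEP2 Hst x) => st1 [P1 [M1 [y Hy]]].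
      exists st1; do 2!(split; first done). move=> x' Hx'.
      have E : x' = x by apply: Ic1; rewrite Hx Hx'.
      subst x'. by exists y.
    - exists st; split; first done. split; first by move=> ? ?.
      move=> x Hx. by case: Hn; exists x.
  have L2 : forall k st, PIs st -> exists st1, PIs st1 /\ Mono st st1 /\
      (back -> forall y, c2 y = k -> exists x, Pairs st1 x y).
    move=> k st Hst. case: (classic (back /\ exists y, c2 y = k)) => [[Hb [y Hy]]|Hn].
    - case: (stepB HCage HU2 Hu2 HEP1 Hb Hst y) => st1 [P1 [M1 [x Hx]]].
      exists st1; do 2!(split; first done). move=> _ y' Hy'.
      have E : y' = y by apply: Ic2; rewrite Hy Hy'.
      subst y'. by exists x.
    - exists st; split; first done. split; first by move=> ? ?.
      move=> Hb y Hy. by case: Hn; split => //; exists y.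
  have HR : forall k st, exists st', R k st st'.
    move=> k st. case: (classic (PIs st)) => [Hst|Hn]; last by exists st.
    case: (L1 k st Hst) => st1 [P1 [M1 F1]]. case: (L2 k st1 P1) => st2 [P2 [M2 F2]].
    exists st2 => _. split; first done. split; first exact: Mono_trans M1 M2.
    split; last done. move=> x Hx. case: (F1 x Hx) => y Hy. exists y. exact: M2.
  case: (build_seq (MkSt g1 g2) HR) => s [Hs0 Hs].
  have Ps : forall k, PIs (s k).
    elim=> [|k IH]; first by rewrite Hs0. by case: (Hs k IH).
  have Ms1 : forall k d, Mono (s k) (s (k + d)).
    move=> k; elim=> [|d IH]; first by rewrite addn0 => ? ?.
    rewrite addnS. apply: Mono_trans IH _. by case: (Hs _ (Ps (k + d))) => _ [].
  have Ms : forall k k', k <= k' -> Mono (s k) (s k').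
    move=> k k' /subnKC <-. exact: Ms1.
  have Hex : forall x, exists y, exists k, Pairs (s k) x y.
    move=> x. case: (Hs (c1 x) (Ps _)) => _ [_ [F _]]. case: (F x erefl) => y Hy.
    by exists y, (c1 x).+1.
  pose alpha x := proj1_sig (cid (Hex x)).
  have Halpha : forall x, exists k, Pairs (s k) x (alpha x).
    move=> x. exact: proj2_sig (cid (Hex x)).
  have Huniq : forall k x y, Pairs (s k) x y -> alpha x = y.
    move=> k x y H. case: (Halpha x) => k' H'.
    apply: (@Pairs_fun _ _ _ _ _ _ (s (maxn k k')) x _ _ (Ps _)).
    - exact: (Ms _ _ (leq_maxr _ _) _ _ H').
    - exact: (Ms _ _ (leq_maxl _ _) _ _ H).
  have Big : forall a (xs : 'I_a -> U1) m, exists M, m <= M /\ forall j, Pairs (s M) (xs j) (alpha (xs j)).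
    move=> a xs m. apply: max_ord.
    - move=> k k' j Hk. exact: Ms.
    - move=> j. exact: Halpha.
  exists alpha.
  have Hrel : forall r xs, (srel U1 r xs <-> srel U2 r (fun i => alpha (xs i))).
    move=> r xs. case: (Big _ xs 0) => M [_ HM].
    case: (Ps M) => phi [[[_ Hp2] [_ Hp3]] [_ Hg]].
    have Ha := fun j => PI_pair Hg (HM j).
    case: (fchoice Ha) => av Hav.
    have E1 : (fun i => proj1_sig (av i)) = xs by apply: functional_extensionality => i; case: (Hav i).
    have E2 : (fun i => phi (av i)) = (fun i => alpha (xs i)) by apply: functional_extensionality => i; case: (Hav i).
    split.
    - move=> H. rewrite -E2. apply: Hp2. rewrite /= E1. exact: H.
    - move=> H. rewrite -E2 in H. have := Hp3 _ _ H. by rewrite /= E1.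
  split; [split; [split|split]|].
  - move=> f xs. case: (Halpha (sfun U1 f xs)) => k0 H0'.
    case: (Big _ xs k0) => M [HkM HM].
    case: (Ps M) => phi [[[Hp1 _] _] [_ Hg]].
    have Ha := fun j => PI_pair Hg (HM j).
    case: (fchoice Ha) => av Hav.
    case: (PI_pair Hg (Ms _ _ HkM _ _ H0')) => a' [Ha'1 Ha'2].
    have E1 : (fun i => proj1_sig (av i)) = xs by apply: functional_extensionality => i; case: (Hav i).
    have E2 : (fun i => phi (av i)) = (fun i => alpha (xs i)) by apply: functional_extensionality => i; case: (Hav i).
    have Ea : a' = sfun (fg_sub (s1 (s M))) f av by apply: sig_eq; rewrite Ha'1 /= E1.
    by rewrite -Ha'2 Ea Hp1 E2.
  - move=> r xs. by move/Hrel.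
  - move=> x x' E. case: (Big _ (fun i : 'I_2 => if val i == 0 then x else x') 0) => M [_ HM].
    case: (Ps M) => phi [[_ [Ip _]] [_ Hg]].
    case: (PI_pair Hg (HM ord0)) => a [Ha1 Ha2].
    case: (PI_pair Hg (HM (@Ordinal 2 1 erefl))) => a' [Ha'1 Ha'2].
    rewrite /= in Ha1 Ha2 Ha'1 Ha'2. rewrite -Ha1 -Ha'1. congr proj1_sig. apply: Ip. by rewrite Ha2 Ha'2.
  - move=> r xs. by move/Hrel.
  - split; last split.
    + move=> x. case: (Halpha x) => k H. case: (Ps k) => phi [_ [Hu Hg]].
      case: (PI_pair Hg H) => a [<- <-]. exact: Hu.
    + move=> i. apply: (Huniq 0). rewrite Hs0. by exists i.
    + move=> Hb y. case: (Hs (c2 y) (Ps _)) => _ [_ [_ F]]. case: (F Hb y erefl) => x Hx.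
      exists x. exact: Huniq Hx.
Qed.

End BF2.

Section Conseq.
Context {L : Signature} (Ccl : @Class L) (T : Structure L).
Hypothesis (HCage : age Ccl).
Implicit Types A B C D : Structure L.

Lemma init_emb' (V : Structure L) (v : V -> T) A (h : A -> T) :
  EP Ccl v -> Kbar Ccl V -> Kbar Ccl A -> is_hom v -> is_hom h ->
  exists phi : fg_sub (g0 A) -> V, is_emb phi /\ forall a, v (phi a) = h (proj1_sig a).
Proof.
  move=> HEP HV HA Hv Hh.
  have HV0 : Ccl (fg_sub (g0 V)) := Kbar_fg _ HCage HV.
  have HA0 : Ccl (fg_sub (g0 A)) := Kbar_fg _ HCage HA.
  case: HCage => _ [_ [_ [_ JEP]]].
  case: (JEP _ _ HV0 HA0) => D [_ [[e1 He1] [e2 He2]]].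
  case: (closed_factor He1 He2) => m [Hm _].
  case: (HEP _ _ m (fun b => h (proj1_sig b)) (fun a => proj1_sig a) HV0 HA0 Hm
           (hom_comp (proj1 (val_hom _)) Hh) (val_hom _)).
  - apply: hom_eq_fg; [exact: hom_comp (proj1 (val_hom _)) Hv
                      | exact: hom_comp (proj1 Hm) (hom_comp (proj1 (val_hom _)) Hh)
                      | by case].
  - move=> e' [He' [_ Hv']]. by exists e'.
Qed.

Lemma univ_of_EP (V : Structure L) (v : V -> T) :
  Kbar Ccl V -> is_hom v -> EP Ccl v -> universal_within Ccl v.
Proof.
  move=> HV Hv HEP A h HA Hh.
  case: (init_emb' HEP HV HA Hv Hh) => phi [Hphi Hphiu].
  have H0 : PI h v (g0 A) (g0 V) by exists phi; do 2!(split; first done); case.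
  case: (BF_thm HCage HA HV Hh Hv HEP (back := false) (fun F => match notF F with end) H0)
    => alpha [Ha [Hau _]].
  exists alpha; split; first done. by move=> a; rewrite Hau.
Qed.

Lemma homog_of_EP (V : Structure L) (v : V -> T) :
  Kbar Ccl V -> is_hom v -> EP Ccl v -> homogeneous_hom v.
Proof.
  move=> HV Hv HEP n g i Hi Hiu.
  have H0 : PI v v g (fun j => i (elt g j)) by exists i; do 2!(split; first done).
  case: (BF_thm HCage HV HV Hv Hv HEP (back := true) (fun _ => HEP) H0)
    => alpha [Ha [Hau [Hag Hsurj]]].
  exists alpha; split; first by split; [done| exact: Hsurj].
  split; first done.
  apply: hom_eq_fg.
  - exact: hom_comp (proj1 (val_hom _)) (proj1 Ha).
  - exact: proj1 Hi.
  - move=> j. exact: Hag.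
Qed.

Lemma EP_of_univ_homog (V : Structure L) (v : V -> T) :
  is_hom v -> universal_within Ccl v -> homogeneous_hom v -> EP Ccl v.
Proof.
  move=> Hv Huniv Hhom A B f hB e HA HB Hf HhB He Hcomm.
  case: (Huniv B hB (age_Kbar HCage HB) HhB) => j [Hj Hjv].
  case: (age_fingen HCage HA) => n [gA HgA].
  pose g := fun i => e (gA i).
  have Hs : forall y : fg_sub g, exists a, e a = proj1_sig y.
    move=> y. case: (gen_surj (proj1 He) (proj2_sig y)) => a [_ E]. by exists a.
  case: (factor He (proj1 (val_hom _)) Hs) => m [Hm Em].
  have Hme : is_emb m := emb_of_comp Hm He (val_hom _) Em.
  pose i := fun y => j (f (m y)).
  have Hi : is_emb i := emb_comp Hme (emb_comp Hf Hj).
  have Hiu : forall y, v (i y) = v (proj1_sig y) by move=> y; rewrite /i -Hjv -Hcomm Em.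
  case: (Hhom n g i Hi Hiu) => alpha [Halpha [Hav Hai]].
  case: (iso_inv Halpha) => beta [Hbeta [Hba Hab]].
  exists (fun b => beta (j b)); split; first exact: emb_comp Hj (iso_emb Hbeta).
  split.
  - move=> a. pose y : fg_sub g := exist _ (e a) (hom_gen (proj1 He) (HgA a)).
    have Hmy : m y = a by apply: (proj1 (proj2 He)); rewrite Em.
    have := Hai y. rewrite /i Hmy /= => <-. by rewrite Hba.
  - move=> b. have := Hav (beta (j b)). rewrite Hab => <-. by rewrite Hjv.
Qed.

Lemma uniq_of_EP (V W : Structure L) (v : V -> T) (w : W -> T) :
  Kbar Ccl V -> is_hom v -> EP Ccl v -> Kbar Ccl W -> is_hom w -> EP Ccl w ->
  exists h : W -> V, is_iso h /\ (forall x, w x = v (h x)).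
Proof.
  move=> HV Hv HEPv HW Hw HEPw.
  case: (init_emb' HEPv HV HW Hv Hw) => phi [Hphi Hphiu].
  have H0 : PI w v (g0 W) (g0 V) by exists phi; do 2!(split; first done); case.
  case: (BF_thm HCage HW HV Hw Hv HEPv (back := true) (fun _ => HEPw) H0)
    => alpha [Ha [Hau [_ Hsurj]]].
  exists alpha; split; first by split; [done| exact: Hsurj].
  by move=> x; rewrite Hau.
Qed.

End Conseq.

Section NSsec.
Context {L : Signature}.
Implicit Types A B C : Structure L.

Local Unset Implicit Arguments.
Record NS := MkNS {
  nP : nat -> Prop;
  nR : forall r : RelSym L, ('I_(rel_ar r) -> nat) -> Prop;
  nF : forall f : FunSym L, ('I_(fun_ar f) -> nat) -> nat;
  nC : forall f xs, (forall i, nP (xs i)) -> nP (nF f xs) }.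
Local Set Implicit Arguments.
Arguments nC n {f xs}.

Definition toS (D : NS) : Structure L :=
  {| carrier := {x | nP D x};
     srel := fun r xs => nR D r (fun i => proj1_sig (xs i));
     sfun := fun f xs => exist _ (nF D f (fun i => proj1_sig (xs i))) (nC D (fun i => proj2_sig (xs i))) |}.

Definition le (D D' : NS) :=
  (forall x, nP D x -> nP D' x) /\
  (forall f xs, (forall i, nP D (xs i)) -> nF D' f xs = nF D f xs) /\
  (forall r xs, (forall i, nP D (xs i)) -> (nR D' r xs <-> nR D r xs)).

Lemma le_refl D : le D D.
Proof. by split; [|split]. Qed.

Lemma le_trans D1 D2 D3 : le D1 D2 -> le D2 D3 -> le D1 D3.
Proof.
  move=> [P1 [F1 R1]] [P2 [F2 R2]]; split; last split.
  - move=> x H. exact: P2 (P1 _ H).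
  - move=> f xs H. rewrite F2; first exact: F1. move=> i; exact: P1.
  - move=> r xs H. rewrite R2; first exact: R1. move=> i; exact: P1.
Qed.

Definition inclN D D' (H : le D D') : toS D -> toS D' :=
  fun x => exist _ (proj1_sig x) (proj1 H _ (proj2_sig x)).

Lemma inclN_emb D D' (H : le D D') : is_emb (inclN H).
Proof.
  case: (H) => HP [HF HR]. split; [split|split].
  - move=> f xs. apply: sig_eq => /=. rewrite HF //. move=> i; exact: proj2_sig.
  - move=> r xs /= Hr. apply/HR => //. move=> i; exact: proj2_sig.
  - move=> x y E. apply: sig_eq. exact: (f_equal (@proj1_sig _ _) E).
  - move=> r xs /= Hr. apply/HR => //. move=> i; exact: proj2_sig.
Qed.

Definition liftN A D (e : A -> nat) (He : forall a, nP D (e a)) : A -> toS D :=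
  fun a => exist _ (e a) (He a).

Lemma NS_of (E : Structure L) (c : E -> nat) : injective c ->
  exists D : NS, exists psi : E -> toS D, is_iso psi /\ (forall y, proj1_sig (psi y) = c y) /\
     (forall z, nP D z <-> exists y, c y = z).
Proof.
  move=> Ic.
  pose P z := exists y, c y = z.
  pose F f (xs : 'I_(fun_ar f) -> nat) :=
    match emi (forall i, P (xs i)) with
    | left H => c (sfun E f (fun i => proj1_sig (cid (H i))))
    | right _ => 0 end.
  have HC : forall f xs, (forall i, P (xs i)) -> P (F f xs).
    move=> f xs H. rewrite /F. case: (emi _) => [H'|]; last by case.
    by eexists.
  pose R r (xs : 'I_(rel_ar r) -> nat) := exists ys, (forall i, c (ys i) = xs i) /\ srel E r ys.
  pose D := MkNS P R F HC.
  have Hpsi : forall y, nP D (c y) by move=> y; exists y.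
  exists D, (liftN Hpsi); split; last by split.
  split; last first.
    move=> [z [y Hy]]. exists y. apply: sig_eq. by rewrite /= Hy.
  split; [split|split].
  - move=> f ys. apply: sig_eq => /=. rewrite /F. case: (emi _) => [H|H]; last first.
      by case: H => i; exists (ys i).
    congr (c (sfun E f _)). apply: functional_extensionality => i.
    apply: Ic. by case: (cid (H i)).
  - move=> r ys H. by exists ys.
  - move=> x y E'. apply: Ic. exact: (f_equal (@proj1_sig _ _) E').
  - move=> r ys [ys' [H1 H2]].
    have -> : ys = ys' by apply: functional_extensionality => i; apply: Ic; rewrite H1.
    done.
Qed.

Lemma img_closed A B (h : A -> B) : is_hom h -> closed (fun w => exists x, h x = w).
Proof.
  move=> [H1 _] f ws Hws. case: (fchoice Hws) => xs Hxs.
  exists (sfun A f xs). rewrite H1. congr (sfun _ _ _). by apply: functional_extensionality.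
Qed.

Lemma gen_img A B (h : A -> B) n (g : 'I_n -> B) y : is_hom h ->
  (forall i, exists x, h x = g i) -> gen g y -> exists x, h x = y.
Proof. move=> Hh Hg Hy. exact: (Hy _ (img_closed Hh) Hg). Qed.

Lemma emb_through A B (D : Structure L) (m : A -> B) (psi : B -> D) (e : A -> D) :
  is_emb psi -> is_emb e -> (forall x, psi (m x) = e x) -> is_emb m.
Proof.
  move=> [[Hp1 Hp2] [Ip Rp]] [[He1 He2] [Ie Re]] E.
  have Hm : is_hom m.
    split.
    - move=> f xs. apply: Ip. rewrite E He1 Hp1. congr (sfun _ _ _).
      apply: functional_extensionality => i. by rewrite E.
    - move=> r xs H. apply: Rp.
      have -> : (fun i => psi (m (xs i))) = (fun i => e (xs i)) by apply: functional_extensionality => i; rewrite E.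
      exact: He2.
  apply: (emb_of_comp Hm) E; last by split; [split|split].
  by split; [split|split].
Qed.

End NSsec.

Section Union.
Local Unset Implicit Arguments.
Context {L : Signature} (T : Structure L) (D : nat -> @NS L) (h : forall k, toS (D k) -> T).
Hypotheses (Hle : forall k, le (D k) (D k.+1))
  (Hh : forall k x, h k.+1 (inclN (Hle k) x) = h k x)
  (Hhom : forall k, is_hom (h k)).
Local Set Implicit Arguments.

Lemma le_mono k k' : k <= k' -> le (D k) (D k').
Proof.
  move/subnKC <-. elim: (k' - k) => [|d IH]; first by rewrite addn0; exact: le_refl.
  rewrite addnS. exact: le_trans IH (Hle _).
Qed.

Lemma P_mono k k' z : k <= k' -> nP (D k) z -> nP (D k') z.
Proof. move=> H. exact: (proj1 (le_mono H)). Qed.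

Lemma h_mono_d d k (H : le (D k) (D (d + k))) x : h (d + k) (inclN H x) = h k x.
Proof.
  elim: d H => [|d IH] H /=.
  - congr (h k). exact: sig_eq.
  - have H' : le (D k) (D (d + k)) := le_mono (leq_addl d k).
    rewrite -(IH H') -(Hh (d + k) (inclN H' x)). congr (h _). exact: sig_eq.
Qed.

Lemma h_mono k k' (H : le (D k) (D k')) x : k <= k' -> h k' (inclN H x) = h k x.
Proof.
  move=> Hk. have E : k' = (k' - k) + k by rewrite subnK.
  move: (k' - k) E => d E. subst k'. exact: h_mono_d.
Qed.

Lemma stage_ex a (xs : 'I_a -> nat) : (forall i, exists k, nP (D k) (xs i)) ->
  forall m, exists k, m <= k /\ forall i, nP (D k) (xs i).
Proof. move=> H m. apply: max_ord => //. move=> k k' i Hk. exact: P_mono. Qed.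

Definition stage_of a (xs : 'I_a -> nat) : nat :=
  match emi (exists k, forall i, nP (D k) (xs i)) with
  | left H => proj1_sig (cid H) | right _ => 0 end.

Lemma stage_ofP a (xs : 'I_a -> nat) : (exists k, forall i, nP (D k) (xs i)) ->
  forall i, nP (D (stage_of xs)) (xs i).
Proof.
  move=> H. rewrite /stage_of. case: (emi _) => [H'|]; last by [].
  exact: proj2_sig (cid H').
Qed.

Definition PU z := exists k, nP (D k) z.
Definition FU f (xs : 'I_(fun_ar f) -> nat) := nF (D (stage_of xs)) f xs.
Definition RU r (xs : 'I_(rel_ar r) -> nat) := exists k, (forall i, nP (D k) (xs i)) /\ nR (D k) r xs.
Arguments FU : clear implicits.
Arguments RU : clear implicits.

Lemma FU_eq k f xs : (forall i, nP (D k) (xs i)) -> FU f xs = nF (D k) f xs.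
Proof.
  move=> H. have HS := stage_ofP (ex_intro _ k H).
  rewrite /FU. set K := stage_of xs in HS *.
  have [F1 F2] : nF (D (maxn k K)) f xs = nF (D K) f xs /\ nF (D (maxn k K)) f xs = nF (D k) f xs.
    split; [apply: (proj1 (proj2 (le_mono (leq_maxr k K)))) | apply: (proj1 (proj2 (le_mono (leq_maxl k K))))] => //.
  by rewrite -F1 F2.
Qed.

Lemma RU_eq k r xs : (forall i, nP (D k) (xs i)) -> (RU r xs <-> nR (D k) r xs).
Proof.
  move=> H. split; last by exists k.
  move=> [K [HK HR]].
  have E1 := proj2 (proj2 (le_mono (leq_maxr k K))) r xs HK.
  have E2 := proj2 (proj2 (le_mono (leq_maxl k K))) r xs H.
  by apply/E2; apply/E1.
Qed.

Lemma CU f xs : (forall i, PU (xs i)) -> PU (FU f xs).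
Proof.
  move=> H. case: (stage_ex H 0) => k [_ Hk].
  exists k. rewrite (FU_eq Hk). exact: nC.
Qed.

Definition NU : @NS L := MkNS PU RU FU CU.

Lemma le_U k : le (D k) NU.
Proof.
  split; last split.
  - move=> z Hz. by exists k.
  - move=> f xs H. exact: FU_eq.
  - move=> r xs H. exact: RU_eq.
Qed.

Definition UU := toS NU.
Definition zst (x : UU) : nat := proj1_sig (cid (proj2_sig x)).
Lemma zstP (x : UU) : nP (D (zst x)) (proj1_sig x).
Proof. exact: proj2_sig (cid (proj2_sig x)). Qed.
Definition uu (x : UU) : T := h (zst x) (exist _ (proj1_sig x) (zstP x)).

Lemma uu_incl k x : uu (inclN (le_U k) x) = h k x.
Proof.
  rewrite /uu. set K := zst _. set HK := zstP _.
  have H1 : le (D k) (D (maxn k K)) := le_mono (leq_maxl k K).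
  have H2 : le (D K) (D (maxn k K)) := le_mono (leq_maxr k K).
  rewrite -(h_mono H1 x (leq_maxl k K)) -(h_mono H2 _ (leq_maxr k K)).
  congr (h _). exact: sig_eq.
Qed.

Lemma UU_stage n (xs : 'I_n -> UU) m : exists k, m <= k /\ forall i, nP (D k) (proj1_sig (xs i)).
Proof. apply: stage_ex => i. exact: proj2_sig (xs i). Qed.

Lemma UU_lift k n (xs : 'I_n -> UU) (H : forall i, nP (D k) (proj1_sig (xs i))) :
  xs = fun i => inclN (le_U k) (exist _ (proj1_sig (xs i)) (H i)).
Proof. apply: functional_extensionality => i. exact: sig_eq. Qed.

Lemma uu_hom : is_hom uu.
Proof.
  have He := fun k => inclN_emb (le_U k).
  split.
  - move=> f xs. case: (UU_stage xs 0) => k [_ H].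
    rewrite (UU_lift H).
    rewrite -(proj1 (proj1 (He k))) uu_incl (proj1 (Hhom k)).
    congr (sfun _ _ _). apply: functional_extensionality => i. by rewrite uu_incl.
  - move=> r xs Hr. case: (UU_stage xs 0) => k [_ H].
    rewrite (UU_lift H) in Hr *.
    have Hr' := proj2 (proj2 (He k)) _ _ Hr.
    have := proj2 (Hhom k) _ _ Hr'.
    have -> : (fun i => h k (exist (nP (D k)) (proj1_sig (xs i)) (H i))) =
              (fun i => uu (inclN (le_U k) (exist (nP (D k)) (proj1_sig (xs i)) (H i)))).
      apply: functional_extensionality => i. by rewrite uu_incl.
    done.
Qed.

Lemma UU_countable : countable UU.
Proof. exists (fun x => proj1_sig x) => x y E. exact: sig_eq. Qed.

Lemma UU_img k n (g : 'I_n -> UU) : (forall i, nP (D k) (proj1_sig (g i))) ->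
  forall y, gen g y -> exists x, inclN (le_U k) x = y.
Proof.
  move=> H y Hy. apply: (gen_img (proj1 (inclN_emb (le_U k)))) Hy => i.
  exists (exist _ _ (H i)). exact: sig_eq.
Qed.

End Union.

Section Constr.
Context {L : Signature} (Ucl Ccl : @Class L) (T : Structure L).
Hypotheses (HU : strict Ucl) (HT : Kbar Ucl T) (HC : fraisse Ccl)
  (HCU : forall A, Ccl A -> Ucl A) (Hfree : free_in Ccl Ucl).
Implicit Types A B C : Structure L.

Let HCage : age Ccl := ageC HC.

Definition code (l c : nat) : nat := pickle (l, c).
Lemma code_inj l c l' c' : code l c = code l' c' -> l = l' /\ c = c'.
Proof. by move/(pcan_inj pickleK) => [-> ->]. Qed.

Definition Bnd (m : nat) (D : @NS L) := forall z, nP D z -> exists l c, l < m /\ z = code l c.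

Lemma transport m (D : @NS L) (sh : toS D -> T) (E : Structure L) (j : toS D -> E) (hE : E -> T) :
  Bnd m D -> Ccl E -> is_emb j -> is_hom hE -> (forall x, hE (j x) = sh x) ->
  exists (D' : @NS L) (sh' : toS D' -> T) (psi : E -> toS D'),
    is_iso psi /\ (forall x, proj1_sig (psi (j x)) = proj1_sig x) /\ (forall y, sh' (psi y) = hE y) /\
    (exists H : le D D', forall x, sh' (inclN H x) = sh x) /\ Bnd m.+1 D' /\ Ccl (toS D') /\ is_hom sh'.
Proof.
  move=> HB HE Hj HhE Hjh.
  case: (fingen_countable (age_fingen HCage HE)) => cE IcE.
  pose c y := match emi (exists x, j x = y) with
              | left H => proj1_sig (proj1_sig (cid H)) | right _ => code m (cE y) end.
  have Hcj : forall x, c (j x) = proj1_sig x.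
    move=> x. rewrite /c. case: (emi _) => [H|H]; last by case: H; exists x.
    case: (cid H) => x' Hx' /=. by rewrite (proj1 (proj2 Hj) _ _ Hx').
  have Hcb : forall y, exists l c', l < m.+1 /\ c y = code l c'.
    move=> y. rewrite /c. case: (emi _) => [H|H].
    - case: (cid H) => x _ /=. case: (HB _ (proj2_sig x)) => l [c' [Hl Ez]].
      exists l, c'. split; [exact: ltnW | exact: Ez].
    - by exists m, (cE y).
  have Ic : injective c.
    move=> y y'. rewrite /c.
    case: (emi (exists x, j x = y)) => [H|H]; case: (emi (exists x, j x = y')) => [H'|H'] Ec.
    - move: Ec. case: (cid H) => x Hx. case: (cid H') => x' Hx' /= Ec. subst y y'.
      by rewrite (sig_eq Ec).
    - move: Ec. case: (cid H) => x Hx /= Ec. case: (HB _ (proj2_sig x)) => l [c' [Hl Ez]].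
      rewrite Ez in Ec. case: (code_inj Ec) => El _. by rewrite El ltnn in Hl.
    - move: Ec. case: (cid H') => x Hx /= Ec. case: (HB _ (proj2_sig x)) => l [c' [Hl Ez]].
      rewrite Ez in Ec. case: (code_inj Ec) => El _. by rewrite -El ltnn in Hl.
    - move: Ec. move/code_inj => [_ /IcE] //.
  case: (NS_of Ic) => D' [psi [Hpsi [Hpv HP']]].
  case: (iso_inv Hpsi) => psii [Hpsii [Hpp1 Hpp2]].
  have Hpj : forall x, proj1_sig (psi (j x)) = proj1_sig x by move=> x; rewrite Hpv Hcj.
  pose iota x := psi (j x).
  have Hiota : is_emb iota := emb_comp Hj (iso_emb Hpsi).
  have HPle : forall z, nP D z -> nP D' z.
    move=> z Hz. apply/HP'. exists (j (exist _ z Hz)). by rewrite Hcj.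
  have Hle : le D D'.
    split; last split; first exact: HPle.
    - move=> f xs H. pose x' := fun i => exist (nP D) (xs i) (H i).
      have := f_equal (@proj1_sig _ _) (proj1 (proj1 Hiota) f x').
      have -> : (fun i => iota (x' i)) = (fun i => exist (nP D') (xs i) (HPle _ (H i))).
        apply: functional_extensionality => i. apply: sig_eq. by rewrite /iota Hpj.
      move=> /= <-. by rewrite /iota Hpj.
    - move=> r xs H. pose x' := fun i => exist (nP D) (xs i) (H i).
      split.
      + move=> Hr. apply: (proj2 (proj2 Hiota) r x').
        have -> : (fun i => iota (x' i)) = (fun i => exist (nP D') (xs i) (HPle _ (H i))).
          apply: functional_extensionality => i. apply: sig_eq. by rewrite /iota Hpj.
        exact: Hr.
      + move=> Hr. have := proj2 (proj1 Hiota) r x' Hr.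
        have -> : (fun i => iota (x' i)) = (fun i => exist (nP D') (xs i) (HPle _ (H i))).
          apply: functional_extensionality => i. apply: sig_eq. by rewrite /iota Hpj.
        done.
  exists D', (fun x => hE (psii x)), psi; split; first done.
  split; first exact: Hpj. split; first by move=> y; rewrite Hpp1.
  split.
    exists Hle => x. have -> : inclN Hle x = psi (j x) by apply: sig_eq; rewrite Hpj.
    by rewrite Hpp1 Hjh.
  split.
    move=> z /HP' [y <-]. exact: Hcb.
  split; first exact: age_iso HCage HE Hpsi.
  exact: hom_comp (proj1 (iso_emb Hpsii)) HhE.
Qed.

End Constr.

Section Constr2.
Context {L : Signature} (Ucl Ccl : @Class L) (T : Structure L).
Hypotheses (HU : strict Ucl) (HT : Kbar Ucl T) (HC : fraisse Ccl)
  (HCU : forall A, Ccl A -> Ucl A) (Hfree : free_in Ccl Ucl).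
Implicit Types A B C : Structure L.

Let HCage : age Ccl := ageC HC.

Local Unset Implicit Arguments.
Record Stg := MkStg { sD : @NS L; sh : toS sD -> T }.
Local Set Implicit Arguments.

Definition Inv k (st : Stg) := Ccl (toS (sD st)) /\ is_hom (sh st) /\ Bnd k.+1 (sD st).
Definition Ext (st st' : Stg) := exists H : le (sD st) (sD st'), forall x, sh st' (inclN H x) = sh st x.

Lemma init_stage : exists st, Inv 0 st.
Proof.
  case: (exists_C_to_T HU HT HC HCU) => A [h [HA Hh]].
  case: (fingen_countable (age_fingen HCage HA)) => cA IcA.
  have Ic : injective (fun y => code 0 (cA y)) by move=> y y' /code_inj [_ /IcA].
  case: (NS_of Ic) => D [psi [Hpsi [Hpv HP]]].
  case: (iso_inv Hpsi) => psii [Hpsii _].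
  exists (MkStg D (fun x => h (psii x))); split; first exact: age_iso HCage HA Hpsi.
  split; first exact: hom_comp (proj1 (iso_emb Hpsii)) Hh.
  move=> z /HP [y <-]. by exists 0, (cA y).
Qed.

Definition Sf : nat -> Structure L := proj1_sig (cid (proj1 (proj2 (proj2 HCage)))).
Lemma Sf_spec A : Ccl A -> exists n, isomorphic A (Sf n).
Proof. exact: (proj2_sig (cid (proj1 (proj2 (proj2 HCage))))). Qed.

Definition cS (j : nat) : Sf j -> nat :=
  match emi (countable (Sf j)) with left H => proj1_sig (cid H) | right _ => fun _ => 0 end.
Lemma cS_inj j : countable (Sf j) -> injective (@cS j).
Proof.
  rewrite /cS => H. case: (emi _) => [H'|//]. exact: proj2_sig (cid H').
Qed.

Definition gSig (j : nat) : {n : nat & 'I_n -> Sf j} :=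
  match emi (fingen (Sf j)) with
  | left H => existT _ (proj1_sig (cid H)) (proj1_sig (cid (proj2_sig (cid H))))
  | right _ => existT _ 0 (g0 _) end.
Definition gSn j := projT1 (gSig j).
Definition gS j : 'I_(gSn j) -> Sf j := projT2 (gSig j).
Lemma gS_gen j : fingen (Sf j) -> forall x, gen (@gS j) x.
Proof.
  rewrite /gS /gSn /gSig => H. case: (emi _) => [H'|//] /=.
  case: (cid H') => n Hn /=. case: (cid Hn) => g Hg /=. exact: Hg.
Qed.

Definition cT : T -> nat := proj1_sig (cid (proj1 HT)).
Lemma cT_inj : injective cT.
Proof. exact: proj2_sig (cid (proj1 HT)). Qed.

Local Unset Implicit Arguments.
Record Task := MkTask {
  tA : Structure L; tB : Structure L; tn : nat; tgA : 'I_tn -> tA; tf : tA -> tB;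
  thB : tB -> T; te : tA -> nat; tj : nat; tpsi : tB -> Sf tj; tpsii : Sf tj -> tB }.
Local Set Implicit Arguments.

Definition Valid (st : Stg) (t : Task) :=
  Ccl (tA t) /\ Ccl (tB t) /\ (forall x, gen (tgA t) x) /\ is_emb (tf t) /\ is_hom (thB t) /\
  is_iso (tpsi t) /\ is_iso (tpsii t) /\ (forall b, tpsii t (tpsi t b) = b) /\
  (forall s, tpsi t (tpsii t s) = s) /\
  exists He : forall a, nP (sD st) (te t a),
    is_emb (liftN He) /\ forall a, sh st (liftN He a) = thB t (tf t a).

Definition Solved (st : Stg) (t : Task) :=
  exists (e : tB t -> nat) (He : forall b, nP (sD st) (e b)),
    is_emb (liftN He) /\ (forall a, e (tf t a) = te t a) /\ (forall b, sh st (liftN He b) = thB t b).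

Definition key (t : Task) : nat :=
  pickle ((([seq te t (tgA t i) | i <- enum 'I_(tn t)], tj t),
           [seq cS (tpsi t (tf t (tgA t i))) | i <- enum 'I_(tn t)]),
           [seq cT (thB t (tpsii t (gS l))) | l <- enum 'I_(gSn (tj t))]).

Lemma map_enum_eq (X : eqType) n (f1 f2 : 'I_n -> X) :
  [seq f1 i | i <- enum 'I_n] = [seq f2 i | i <- enum 'I_n] -> forall i, f1 i = f2 i.
Proof. move/eq_in_map => H i. apply: H. by rewrite mem_enum. Qed.

Lemma size_map_enum (X : Type) n (f : 'I_n -> X) : size [seq f i | i <- enum 'I_n] = n.
Proof. by rewrite size_map size_enum_ord. Qed.

Lemma transfer (st st' : Stg) (t t' : Task) :
  Ext st st' -> is_hom (sh st') -> Valid st t -> Valid st t' -> key t = key t' -> Solved st' t' -> Solved st' t.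
Proof.
  case: t => A B n gA f hB e j psi psii.
  case: t' => A' B' n' gA' f' hB' e' j' psi' psii'.
  rewrite /Valid /Solved /key /=.
  move=> [Hle Hsh] Hsh' [HA [HB [HgA [Hf [HhB [Hpsi [Hpsii [Hpp1 [Hpp2 [He [Hee Hec]]]]]]]]]]]
         [HA' [HB' [HgA' [Hf' [HhB' [Hpsi' [Hpsii' [Hpp1' [Hpp2' [He' [Hee' Hec']]]]]]]]]]].
  move/(pcan_inj pickleK) => [E1 Ej E2 E3].
  have En : n = n' by move: (f_equal size E1); rewrite !size_map_enum.
  subst n' j'.
  have E1' := map_enum_eq E1. have E2' := map_enum_eq E2. have E3' := map_enum_eq E3.
  move=> [e3 [He3 [Hemb3 [Hf3 Hh3]]]].
  have HSj : Ccl (Sf j) := age_iso HCage HB Hpsi.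
  have Icj := cS_inj (fingen_countable (age_fingen HCage HSj)).
  pose e2 b := e3 (psii' (psi b)).
  have He2 : forall b, nP (sD st') (e2 b) by move=> b; exact: He3.
  exists e2, He2.
  have Hl2 : liftN He2 = fun b => liftN He3 (psii' (psi b)).
    apply: functional_extensionality => b. exact: sig_eq.
  have Hemb2 : is_emb (liftN He2).
    rewrite Hl2. exact: emb_comp (iso_emb Hpsi) (emb_comp (iso_emb Hpsii') Hemb3).
  split; first done. split.
  - move=> a.
    have Hh1 : is_hom (fun a => liftN He2 (f a)) := hom_comp (proj1 Hf) (proj1 Hemb2).
    have Hh2 : is_hom (fun a => inclN Hle (liftN He a)) := hom_comp (proj1 Hee) (proj1 (inclN_emb Hle)).
    have := hom_eq_fingen HgA Hh1 Hh2 _ a.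
    move=> H. apply: (f_equal (@proj1_sig _ _) (H _)) => i.
    apply: sig_eq => /=. rewrite /e2 (Icj _ _ (E2' i)) Hpp1' Hf3. exact: (esym (E1' i)).
  - have Hgen : forall b, gen (fun l => psii (gS l)) b.
      move=> b. rewrite -(Hpp1 b). apply: hom_gen (proj1 (iso_emb Hpsii)) _.
      apply: gS_gen. exact: age_fingen HCage HSj.
    apply: (hom_eq_fingen Hgen (hom_comp (proj1 Hemb2) Hsh') HhB) => l.
    rewrite Hl2 Hpp2 Hh3. apply: cT_inj. exact: (esym (E3' l)).
Qed.


Lemma step k (st : Stg) (t : nat) : Inv k st ->
  exists st', Inv k.+1 st' /\ Ext st st' /\ forall tau, Valid st tau -> key tau = t -> Solved st' tau.
Proof.
  move=> [HDc [Hsh HBd]].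
  case: (classic (exists tau, Valid st tau /\ key tau = t)) => [[tau' [Hv' Hk']]|Hn]; last first.
    exists st; split.
      split; first done. split; first done.
      move=> z Hz. case: (HBd z Hz) => l [c [Hl E]]. exists l, c; split => //. exact: ltnW.
    split.
      exists (le_refl _) => x. congr (sh st). exact: sig_eq.
    move=> tau Hv Hk. by case: Hn; exists tau.
  have Hv'' := Hv'.
  move: Hv'' => [HA [HB [HgA [Hf [HhB [Hpsi [Hpsii [Hpp1 [Hpp2 [He [Hee Hec]]]]]]]]]]].
  case: (amalg_T HU HT HC HCU Hfree HA HDc HB Hee Hf Hsh HhB Hec)
    => E [g1 [g2 [hE [HE [Hg1 [Hg2 [Hgc [HhE [HhE1 HhE2]]]]]]]]].
  case: (transport HC HBd HE Hg1 HhE HhE1)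
    => D' [sh' [psi [Hps [Hpsj [Hpsh [[Hle Hshle] [HB' [HD'c Hsh']]]]]]]].
  pose st' := MkStg D' sh'.
  have Hext : Ext st st' by exists Hle.
  have Hsol : Solved st' tau'.
    pose e2 b := proj1_sig (psi (g2 b)).
    have He2 : forall b, nP D' (e2 b) by move=> b; exact: proj2_sig.
    exists e2, He2.
    have Hl2 : liftN He2 = fun b => psi (g2 b).
      apply: functional_extensionality => b. exact: sig_eq.
    split; first by rewrite Hl2; exact: emb_comp Hg2 (iso_emb Hps).
    split.
    - move=> a. rewrite /e2 -Hgc Hpsj. done.
    - move=> b. by rewrite Hl2 /= Hpsh HhE2.
  exists st'; split; first by split; [done | split].
  split; first done.
  move=> tau Hv Hk. apply: (transfer Hext Hsh' Hv Hv') => //. by rewrite Hk Hk'.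
Qed.

Definition sched (k : nat) : nat := (Cantor.of_nat k).2.

Theorem exists_EP : exists (U : Structure L) (u : U -> T), Kbar Ccl U /\ is_hom u /\ EP Ccl u.
Proof.
  case: init_stage => st0 Hst0.
  pose R k st st' := Inv k st -> Inv k.+1 st' /\ Ext st st' /\
    (forall tau, Valid st tau -> key tau = sched k -> Solved st' tau).
  have HR : forall k st, exists st', R k st st'.
    move=> k st. case: (classic (Inv k st)) => [Hi|Hn]; last by exists st.
    case: (step (sched k) Hi) => st' Hst'. by exists st'.
  case: (build_seq st0 HR) => s [Hs0 Hs].
  have Hinv : forall k, Inv k (s k).
    elim=> [|k IH]; first by rewrite Hs0. by case: (Hs k IH).
  have HExt : forall k, Ext (s k) (s k.+1) by move=> k; case: (Hs k (Hinv k)) => _ [].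
  pose D k := sD (s k).
  pose h k : toS (D k) -> T := sh (s k).
  pose Hle k : le (D k) (D k.+1) := proj1_sig (cid (HExt k)).
  have Hh : forall k x, h k.+1 (inclN (Hle k) x) = h k x.
    move=> k x. exact: (proj2_sig (cid (HExt k))).
  have Hhom : forall k, is_hom (h k) by move=> k; case: (Hinv k) => _ [].
  exists (UU Hle), (uu h (Hle:=Hle)).
  split.
    split; first exact: UU_countable.
    move=> n g. case: (UU_stage g 0) => k [_ Hk].
    have Hs' : forall y : fg_sub g, exists x, inclN (le_U Hle k) x = proj1_sig y.
      move=> y. apply: (UU_img Hk). exact: (proj2_sig y).
    case: (factor (inclN_emb (le_U Hle k)) (proj1 (val_hom _)) Hs') => m [Hm Em].
    have Hme : is_emb m := emb_of_comp Hm (inclN_emb (le_U Hle k)) (val_hom _) Em.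
    exists (fg_sub g); split; last by exists id; exact: iso_id.
    exact: (age_emb HCage (proj1 (Hinv k)) (fingen_fg g) Hme).
  split; first exact: uu_hom Hh Hhom.
  move=> A B f hB e HA HB Hf HhB He Hcomm.
  case: (age_fingen HCage HA) => n [gA HgA].
  case: (UU_stage (fun i => e (gA i)) 0) => k0 [_ Hk0].
  have Hin : forall a, nP (D k0) (proj1_sig (e a)).
    move=> a. have Hg := hom_gen (proj1 He) (HgA a). case: (UU_img (Hle:=Hle) Hk0 Hg) => x <-. exact: (proj2_sig x).
  case: (Sf_spec HB) => j [psi Hpsi]. case: (iso_inv Hpsi) => psii [Hpsii [Hpp1 Hpp2]].
  pose tau := MkTask A B n gA f hB (fun a => proj1_sig (e a)) j psi psii.
  pose k := Cantor.to_nat (k0, key tau).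
  have Hk : k0 <= k.
    apply/leP. have := Cantor.to_nat_non_decreasing k0 (key tau). rewrite /k. lia.
  have Hsk : sched k = key tau by rewrite /sched /k Cantor.cancel_of_to.
  have He' : forall a, nP (D k) (proj1_sig (e a)) by move=> a; exact: (P_mono (D:=D) Hle Hk (Hin a)).
  have Hincl : forall a, inclN (le_U Hle k) (liftN He' a) = e a by move=> a; exact: sig_eq.
  have Hval : Valid (s k) tau.
    do 9!(split; first done).
    exists He'; split.
    - exact: emb_through (inclN_emb (le_U Hle k)) He Hincl.
    - move=> a /=. rewrite -Hcomm -Hincl. exact: (esym (uu_incl Hh _)).
  case: (Hs k (Hinv k)) => _ [_ Hsol].
  case: (Hsol tau Hval (esym Hsk)) => e2 [He2 [Hemb2 [Hf2 Hh2]]].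
  exists (fun b => inclN (le_U Hle k.+1) (liftN He2 b)); split.
    exact: emb_comp Hemb2 (inclN_emb _).
  split.
  - move=> a. apply: sig_eq => /=. exact: Hf2.
  - move=> b. rewrite (uu_incl Hh). exact: Hh2.
Qed.

End Constr2.

Unset Implicit Arguments.

Theorem theorem3p3 (L : Signature) (Ucl Ccl : @Class L) (T : Structure L) :
  strict Ucl -> Kbar Ucl T ->
  fraisse Ccl -> (forall A, Ccl A -> Ucl A) -> free_in Ccl Ucl ->
  exists (U : Structure L) (u : U -> T),
    Kbar Ccl U /\ is_hom u /\ universal_within Ccl u /\ homogeneous_hom u /\
    (forall (Uh : Structure L) (uh : Uh -> T),
       Kbar Ccl Uh -> is_hom uh -> universal_within Ccl uh -> homogeneous_hom uh ->
       exists h : Uh -> U, is_iso h /\ (forall x, uh x = u (h x))).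
Proof.
  move=> HU HT HC HCU Hfree.
  case: (exists_EP HU HT HC HCU Hfree) => U [u [HUk [Hu HEP]]].
  have HCage := ageC HC.
  exists U, u. split; first done. split; first done.
  split; first exact: (univ_of_EP HCage HUk Hu HEP).
  split; first exact: (homog_of_EP HCage HUk Hu HEP).
  move=> Uh uh HUh Huh Hun Hho.
  have HEPh := EP_of_univ_homog HCage Huh Hun Hho.
  exact: (uniq_of_EP HCage HUk Hu HEP HUh Huh HEPh).
Qed.
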